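(* Let $P$ be a 6-stack of rank $n$ and let $Q$ be a retract of $P$ that is a 4-tower, such that $\#(P(0)\cap Q(0))=2$, where $Q(0)$ is the set of minimal elements of $Q$. Then $n\ge 3$ and the poset $P(3,n)$ has a retract that is a 4-tower.
   Context: All posets are finite. For a poset $P$ and $p\in P$, the rank $r(p)$ of $p$ is the largest $m$ such that there is a chain $p_0<\dots<p_m=p$ in $P$. $P$ is ranked of rank $r(P)$ if every maximal chain has exactly $r(P)+1$ elements. For $0\le i\le j$, $P(i,j)=\{p\in P:i\le r(p)\le j\}$, $P(i)=P(i,i)$ (induced order). A subset $Q\subseteq P$ (induced order) is a retract of $P$ if there is an order-preserving $f:P\to Q$ with $f(q)=q$ for all $q\in Q$. The 6-crown $C_6$ is the poset on $\{x_0,x_1,x_2,y_0,y_1,y_2\}$ whose only strict comparabilities are $x_0<y_0>x_1<y_1>x_2<y_2>x_0$. A 6-stack is a ranked poset $P$ of rank $n\ge1$ such that $P(i,i+1)\cong C_6$ for each $0\le i<n$. The ordinal sum of posets $P_1,\dots,P_k$ ($k\ge1$) is their disjoint union ordered by the orders of the $P_i$ together with $p<q$ whenever $p\in P_i,q\in P_j,i<j$. A 4-tower is an ordinal sum of one or more two-element antichains. *)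

(* Defs.v *)
From HB Require Import structures.
From mathcomp Require Import all_boot all_order.
Set Implicit Arguments. Unset Strict Implicit. Unset Printing Implicit Defensive.
Import Order.Theory.
Local Open Scope order_scope.

(* A finite poset P is a finite type T with a partial order (finPOrderType).
   Subposets are subsets {set T} with the induced order. *)

Section Defs.
Context {disp : Order.disp_t} {T : finPOrderType disp}.

Definition has_chain_to (p : T) (m : nat) : bool :=
  [exists s : (m.+1).-tuple T, sorted <%O (val s) && (last p (val s) == p)].

(* rank r(p): the largest m such that such a chain exists
   (any chain has at most #|T| elements, so m < #|T|) *)
Definition rank (p : T) : nat := \max_(m < #|T| | has_chain_to p m) m.

Definition is_chain (C : {set T}) : bool :=
  [forall x in C, forall y in C, (x <= y) || (y <= x)].
Definition maximal_chain (C : {set T}) : bool :=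
  is_chain C && [forall x, is_chain (x |: C) ==> (x \in C)].

Definition ranked (r : nat) : Prop :=
  forall C : {set T}, maximal_chain C -> #|C| = r.+1.

Definition Prange (i j : nat) : {set T} := [set p | i <= rank p <= j].

(* the order of the 6-crown on 'I_6: x_k = k, y_k = 3 + k (k < 3);
   x_i < y_j iff i = j or i = j + 1 mod 3 *)
Definition crown_le (a b : 'I_6) : bool :=
  (a == b) || [&& (a < 3)%N, (3 <= b)%N &
                  ((val a == b - 3) || (val a == (b - 3).+1 %% 3))].

Definition iso_C6 (A : {set T}) : Prop :=
  exists f : 'I_6 -> T, [/\ injective f, A = f @: setT &
     forall a b, (f a <= f b) = crown_le a b].

Definition six_stack (n : nat) : Prop :=
  [/\ (1 <= n)%N, ranked n & forall i, (i < n)%N -> iso_C6 (Prange i i.+1)].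

(* the ordinal sum of k two-element antichains, on 'I_k * bool *)
Definition tower_le (k : nat) (x y : 'I_k * bool) : bool :=
  (x.1 < y.1)%N || (x == y).

Definition four_tower (Q : {set T}) : Prop :=
  exists k : nat, (1 <= k)%N /\
    exists g : 'I_k * bool -> T, [/\ injective g, Q = g @: setT &
       forall x y, (g x <= g y) = tower_le x y].

Definition retract (A Q : {set T}) : Prop :=
  Q \subset A /\
  exists f : T -> T, [/\ forall x, x \in A -> f x \in Q,
     forall x y, x \in A -> y \in A -> x <= y -> f x <= f y &
     forall q, q \in Q -> f q = q].

Definition minimals (Q : {set T}) : {set T} :=
  [set q in Q | [forall q' in Q, ~~ (q' < q)]].

End Defs.

(* Main.v *)
Require Import Defs.
From mathcomp Require Import all_boot all_order.
From mathcomp Require Import zify.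
Set Implicit Arguments. Unset Strict Implicit. Unset Printing Implicit Defensive.
Import Order.Theory.

Lemma lab_cover (a b c x : 'I_3) : a != b -> b != c -> a != c ->
  [\/ x = a, x = b | x = c].
Proof.
case: a b c x => [[|[|[|a]]] Ha] // [[|[|[|b]]] Hb] // [[|[|[|c]]] Hc] //
  [[|[|[|x]]] Hx] //= _ _ _;
by (try (by constructor 1; apply/val_inj));
   (try (by constructor 2; apply/val_inj)); constructor 3; apply/val_inj.
Qed.

Lemma lab_third (a b : 'I_3) : exists c : 'I_3, c != a /\ c != b.
Proof.
case: a b => [[|[|[|a]]] Ha] // [[|[|[|b]]] Hb] //.
all: first [ by exists (@Ordinal 3 0 isT) | by exists (@Ordinal 3 1 isT)
           | by exists (@Ordinal 3 2 isT) ].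
Qed.

Section Core.
Context {disp : Order.disp_t} {T : finPOrderType disp}.
Variables (n : nat) (rk : T -> nat) (lb : T -> 'I_3) (pt : nat -> 'I_3 -> T).
Hypothesis rk_pt : forall i c, i <= n -> rk (pt i c) = i.
Hypothesis lb_pt : forall i c, i <= n -> lb (pt i c) = c.
Hypothesis pt_eta : forall x, pt (rk x) (lb x) = x.
Hypothesis rk_le : forall x, rk x <= n.
Hypothesis ltE : forall x y, (x < y)%O =
  (rk x + 2 <= rk y) || ((rk y == (rk x).+1) && (lb x != lb y)).

Lemma lt_rk x y : (x < y)%O -> rk x < rk y.
Proof. rewrite ltE => /orP [H|/andP [/eqP H _]]; lia. Qed.

Lemma lt2 x y : rk x + 2 <= rk y -> (x < y)%O.
Proof. by rewrite ltE => ->. Qed.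

Lemma lt1 x y : rk y = (rk x).+1 -> lb x != lb y -> (x < y)%O.
Proof. by move=> H1 H2; rewrite ltE H1 eqxx H2 orbT. Qed.

Lemma le2 x y : rk x + 2 <= rk y -> (x <= y)%O.
Proof. by move=> H; apply/ltW/lt2. Qed.

Lemma le1 x y : rk y = (rk x).+1 -> lb x != lb y -> (x <= y)%O.
Proof. by move=> H1 H2; apply/ltW/lt1. Qed.

Lemma eq_rl x y : rk x = rk y -> lb x = lb y -> x = y.
Proof. by move=> H1 H2; rewrite -(pt_eta x) -(pt_eta y) H1 H2. Qed.

Lemma nlt_inv x y : ~~ (x < y)%O -> rk y = (rk x).+1 -> lb x = lb y.
Proof. by rewrite ltE => /norP [_ H] H1; move: H; rewrite H1 eqxx /= negbK => /eqP. Qed.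

Lemma nlt_rk x y : ~~ (x < y)%O -> rk y < rk x + 2.
Proof. by rewrite ltE => /norP [H _]; lia. Qed.

Definition tower k (g : nat -> bool -> T) := 0 < k /\
  forall l l' b b', l < k -> l' < k ->
    (g l b <= g l' b')%O = (l < l') || ((l == l') && (b == b')).

Definition ret j k (g : nat -> bool -> T) (f : T -> T) :=
  [/\ forall x, j <= rk x -> exists l t, l < k /\ f x = g l t,
      forall x y, j <= rk x -> j <= rk y -> (x <= y)%O -> (f x <= f y)%O &
      forall l t, l < k -> f (g l t) = g l t].

Section Tw.
Variables (k : nat) (g : nat -> bool -> T).
Hypothesis Tw : tower k g.

Lemma tw_le l l' b b' : l < k -> l' < k -> (g l b <= g l' b')%O ->
  l < l' \/ (l = l' /\ b = b').
Proof.
move=> lk l'k; rewrite Tw.2 // => /orP [->|/andP [/eqP -> /eqP ->]]; by [left|right].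
Qed.

Lemma tw_lt l l' b b' : l < l' -> l' < k -> (g l b < g l' b')%O.
Proof.
move=> ll' l'k; have lk : l < k by lia.
rewrite lt_neqAle Tw.2 // ll' andbT; apply/negP => /eqP E.
have := Tw.2 l' l b' b l'k lk; rewrite -E lexx; lia.
Qed.

Lemma tw_ge l l' b b' : l < k -> l' < k -> (g l b <= g l' b')%O -> l <= l'.
Proof. by move=> lk l'k /(tw_le lk l'k) [H|[H _]]; lia. Qed.

Lemma tw_below2 l L t s : l < k -> L < k -> (g l t <= g L s)%O ->
  (g l t <= g L (~~ s))%O -> l < L.
Proof.
move=> lk Lk /tw_le [] // [] // -> -> /tw_le [] //; case=> _; by case: s.
Qed.

Lemma tw_above2 l L t s : l < k -> L < k -> (g L s <= g l t)%O ->
  (g L (~~ s) <= g l t)%O -> L < l.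
Proof.
move=> lk Lk /tw_le [] // [] // -> -> /tw_le [] //; case=> _; by case: t.
Qed.

Lemma tw_eq l L t s : l < k -> L < k -> (g l t <= g L s)%O -> L <= l ->
  g l t = g L s.
Proof. by move=> lk Lk /tw_le [] //; [lia|case=> -> ->]. Qed.

Lemma tw_neq l s : l < k -> g l s != g l (~~ s).
Proof.
move=> lk; apply/negP => /eqP E; have := Tw.2 l l s (~~ s) lk lk.
by rewrite E lexx ltnn eqxx /=; case: s {E}.
Qed.

Lemma tw_incomp l s : l < k -> ~~ (g l s < g l (~~ s))%O.
Proof.
move=> lk; apply/negP => /ltW; rewrite Tw.2 // ltnn eqxx /=; by case: s.
Qed.

Lemma tw_rk l l' t t' : l < l' -> l' < k -> rk (g l t) < rk (g l' t').
Proof. by move=> H1 H2; apply/lt_rk/tw_lt. Qed.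

Lemma tw_shift s : s < k -> tower (k - s) (fun l b => g (l + s) b).
Proof.
move=> sk; split; first lia.
move=> l l' b b' lk l'k; rewrite Tw.2 ?ltn_add2r ?eqn_add2r //; lia.
Qed.

Lemma ret_shift j j' s f : ret j k g f -> j <= j' -> s < k ->
  (forall x, j' <= rk x -> exists l t, [/\ s <= l, l < k & f x = g l t]) ->
  ret j' (k - s) (fun l b => g (l + s) b) f.
Proof.
move=> [_ Fm Ff] jj' sk Fin; split.
- move=> x /Fin [l [t [H1 H2 ->]]]; exists (l - s), t; split; first lia.
  by rewrite subnK.
- move=> x y H1 H2; apply: Fm; lia.
- move=> l t lk; apply: Ff; lia.
Qed.

End Tw.

Lemma orient (h : bool -> nat) : exists s, h s <= h (~~ s).
Proof. case: (leqP (h true) (h false)) => H; [by exists true|exists false => /=; exact: ltnW]. Qed.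

Definition Hst j := forall k g f, tower k g -> ret j k g f ->
  rk (g 0 false) = j -> rk (g 0 true) = j ->
  (forall x, rk x = j -> exists t, f x = g 0 t) /\
  (j = n \/ [/\ j + 3 <= n, 2 < k, exists b, rk (g 1 b) = j + 2 &
     forall x, j + 3 <= rk x -> exists l t, [/\ 2 <= l, l < k & f x = g l t]]).

Definition Vst j := forall k g f s, tower k g -> ret j k g f ->
  rk (g 0 s) = j -> rk (g 0 (~~ s)) = j.+1 -> lb (g 0 s) = lb (g 0 (~~ s)) -> False.


Lemma lt_lab x y : (x < y)%O -> rk y = (rk x).+1 -> lb x != lb y.
Proof. by rewrite ltE => /orP [H|/andP [_ H]] E //; lia. Qed.

Lemma lab_neq x y : rk x = rk y -> x != y -> lb x != lb y.
Proof. by move=> E; apply: contra => /eqP L; apply/eqP/eq_rl. Qed.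

Lemma V_step j : (forall j', j < j' -> j' <= n -> Hst j') -> Vst j.
Proof.
move=> IHH k g f s Tw R R0 R1 L01; case: (R) => Fin Fm Ff.
have k0 : 0 < k := Tw.1.
have jn : j.+1 <= n by rewrite -R1 rk_le.
have dB0 : j <= rk (g 0 s) by rewrite R0.
have dB1 : j <= rk (g 0 (~~ s)) by rewrite R1.
have F0 : forall u, u != lb (g 0 s) -> f (pt j u) = g 0 (~~ s).
  move=> u uw; have Hr : rk (pt j u) = j by rewrite rk_pt; lia.
  have dr : j <= rk (pt j u) by rewrite Hr.
  have [l [t [lk E]]] := Fin (pt j u) dr.
  have H : (pt j u <= g 0 (~~ s))%O.
    by apply: le1; rewrite ?Hr ?R1 // lb_pt; [rewrite -L01|lia].
  have := Fm _ _ dr dB1 H.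
  by rewrite E Ff // => /(tw_eq Tw lk k0) -> .
have F1 : forall u, u != lb (g 0 s) ->
    exists l t, [/\ 0 < l, l < k & f (pt j.+1 u) = g l t].
  move=> u uw; have [v [vu vw]] := lab_third u (lb (g 0 s)).
  have Hr : rk (pt j.+1 u) = j.+1 by rewrite rk_pt.
  have dr : j <= rk (pt j.+1 u) by rewrite Hr.
  have [l [t [lk E]]] := Fin (pt j.+1 u) dr.
  have Hv : rk (pt j v) = j by rewrite rk_pt; lia.
  have dv : j <= rk (pt j v) by rewrite Hv.
  have H1 : (g 0 s <= pt j.+1 u)%O by apply: le1; rewrite ?Hr ?R0 // lb_pt // eq_sym.
  have H2 : (pt j v <= pt j.+1 u)%O by apply: le1; rewrite ?Hr ?Hv // !lb_pt //; lia.
  have := Fm _ _ dB0 dr H1; rewrite E Ff //.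
  have := Fm _ _ dv dr H2; rewrite E F0 //.
  move=> A B; exists l, t; split=> //; exact: (tw_above2 Tw lk k0 B A).
have [u0 [u0w _]] := lab_third (lb (g 0 s)) (lb (g 0 s)).
have [l0 [t0 [l0p l0k _]]] := F1 u0 u0w.
have k1 : 1 < k by lia.
have [s' /= Hs'] := orient (fun b => rk (g 1 b)).
have Bc : (g 0 (~~ s) < g 1 s')%O := tw_lt Tw _ _ (ltn0Sn 0) k1.
have Bd : (g 0 (~~ s) < g 1 (~~ s'))%O := tw_lt Tw _ _ (ltn0Sn 0) k1.
have rc := lt_rk Bc; rewrite R1 in rc.
have dc : j <= rk (g 1 s') by lia.
have dd : j <= rk (g 1 (~~ s')) by lia.
have Bot : forall y l t, j <= rk y -> 0 < l -> l < k -> f y = g l t ->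
    (y <= g 1 s')%O -> (y <= g 1 (~~ s'))%O -> False.
  move=> y l t dy lp lk E H1 H2.
  have := Fm _ _ dy dc H1; have := Fm _ _ dy dd H2; rewrite E !Ff //.
  move=> A B; have := tw_below2 Tw lk k1 B A; lia.
have rp1 : forall u, rk (pt j.+1 u) = j.+1 by move=> u; rewrite rk_pt.
have dp1 : forall u, j <= rk (pt j.+1 u) by move=> u; rewrite rp1.
case: (ltngtP (rk (g 1 s')) (j + 2)) => [?|Hc|Hc]; first lia.
- have [l [t [lp lk E]]] := F1 u0 u0w.
  exfalso; apply: (Bot _ _ _ (dp1 u0) lp lk E); apply: le2; rewrite rp1; lia.
have uc : lb (g 0 s) != lb (g 1 s') by rewrite L01; apply: lt_lab; rewrite ?R1 ?Hc //; lia.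
case: (ltngtP (rk (g 1 (~~ s'))) (j + 3)) => [Hd|Hd|Hd].
- have Hd2 : rk (g 1 (~~ s')) = j + 2 by lia.
  have ud : lb (g 1 s') != lb (g 1 (~~ s')).
    by apply: lab_neq; [lia|exact: (tw_neq Tw s' k1)].
  have ud0 : lb (g 0 s) != lb (g 1 (~~ s')).
    by rewrite L01; apply: lt_lab; rewrite ?R1 ?Hd2 //; lia.
  have jn2 : j + 2 <= n by rewrite -Hc rk_le.
  have Fc : f (pt j.+1 (lb (g 1 s'))) = g 1 (~~ s').
    have cu : lb (g 1 s') != lb (g 0 s) by rewrite eq_sym.
    have [l [t [lp lk E]]] := F1 _ cu.
    have H : (pt j.+1 (lb (g 1 s')) <= g 1 (~~ s'))%O.
      by apply: le1; rewrite ?rp1 ?lb_pt //; lia.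
    by have := Fm _ _ (dp1 _) dd H; rewrite E Ff // => /(tw_eq Tw lk k1) ->.
  have Fd : f (pt j.+1 (lb (g 1 (~~ s')))) = g 1 s'.
    have du : lb (g 1 (~~ s')) != lb (g 0 s) by rewrite eq_sym.
    have [l [t [lp lk E]]] := F1 _ du.
    have H : (pt j.+1 (lb (g 1 (~~ s'))) <= g 1 s')%O.
      by apply: le1; rewrite ?rp1 ?lb_pt // 1?eq_sym //; lia.
    by have := Fm _ _ (dp1 _) dc H; rewrite E Ff // => /(tw_eq Tw lk k1) ->.
  have rk1 : forall b, rk (g 1 b) = j + 2 by case; move: Hc Hd2; case: (s') => /=.
  have Fin' : forall x, j + 2 <= rk x -> exists l t, [/\ 1 <= l, l < k & f x = g l t].
    move=> x hx; have dx : j <= rk x by lia.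
    have [l [t [lk E]]] := Fin x dx; exists l, t; split=> //.
    have [y [b [dy yx Ey]]] : exists y b, [/\ j <= rk y, (y <= x)%O & f y = g 1 b].
      case: (ltngtP (rk x) (j + 2)) => [|Hx|Hx]; first lia.
      - case: (ltngtP (rk x) (j + 3)) => [|Hx3|Hx3]; first lia.
        + exists (g 1 s'), s'; split=> //; [apply: le2; lia| by rewrite Ff].
        + case: (eqVneq (lb x) (lb (g 1 s'))) => Lx.
            exists (g 1 (~~ s')), (~~ s'); split=> //; last by rewrite Ff.
            by apply: le1; [lia|rewrite Lx eq_sym].
          exists (g 1 s'), s'; split=> //; last by rewrite Ff.
          by apply: le1; [lia|rewrite eq_sym].
      - have ucw : lb (g 0 s) != lb (g 1 s') := uc.
        case: (lab_cover (lb x) ucw ud ud0) => Lx.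
        + exists (pt j.+1 (lb (g 1 s'))), (~~ s'); split=> //.
          by apply: le1; rewrite ?rp1 ?lb_pt ?Lx 1?eq_sym //; lia.
        + exists (g 1 s'), s'; split=> //; last by rewrite Ff.
          by rewrite (@eq_rl x (g 1 s')) //; lia.
        + exists (g 1 (~~ s')), (~~ s'); split=> //; last by rewrite Ff.
          by rewrite (@eq_rl x (g 1 (~~ s'))) //; lia.
    by have := Fm _ _ dy dx yx; rewrite Ey E => /(tw_ge Tw k1 lk).
  have [C1 _] := IHH (j + 2) ltac:(lia) jn2 (k - 1) _ f (tw_shift Tw k1)
     (ret_shift R (leq_addr 2 j) k1 Fin') (rk1 _) (rk1 _).
  have rw : rk (pt (j + 2) (lb (g 0 s))) = j + 2 by rewrite rk_pt.
  have [t Et] := C1 _ rw; rewrite /= add0n in Et.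
  have dw : j <= rk (pt (j + 2) (lb (g 0 s))) by rewrite rw; lia.
  have H1 : (pt j.+1 (lb (g 1 s')) <= pt (j + 2) (lb (g 0 s)))%O.
    by apply: le1; rewrite ?rp1 ?rw ?lb_pt 1?eq_sym //; lia.
  have H2 : (pt j.+1 (lb (g 1 (~~ s'))) <= pt (j + 2) (lb (g 0 s)))%O.
    by apply: le1; rewrite ?rp1 ?rw ?lb_pt 1?eq_sym //; lia.
  have := Fm _ _ (dp1 _) dw H1; have := Fm _ _ (dp1 _) dw H2.
  rewrite Fc Fd Et => A B; have := tw_above2 Tw k1 k1 A B; lia.
- have := tw_incomp Tw s' k1; rewrite lt2 //; lia.
- have Ld : lb (g 1 s') = lb (g 1 (~~ s')) by apply: nlt_inv; [exact: (tw_incomp Tw s' k1)|lia].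
  have [v [v1 v2]] := lab_third (lb (g 0 s)) (lb (g 1 s')).
  have [l [t [lp lk E]]] := F1 v v1.
  exfalso; apply: (Bot _ _ _ (dp1 v) lp lk E).
    by apply: le1; rewrite ?rp1 ?lb_pt //; lia.
  by apply: le2; rewrite rp1; lia.
Qed.

Lemma up_lvl j k g f : tower k g -> ret j k g f -> forall y x L b,
  j <= rk y -> j <= rk x -> (y <= x)%O -> f y = g L b -> L < k ->
  exists l t, [/\ L <= l, l < k & f x = g l t].
Proof.
move=> Tw [Fin Fm Ff] y x L b dy dx yx Ey Lk.
have [l [t [lk E]]] := Fin x dx; exists l, t; split=> //.
by have := Fm _ _ dy dx yx; rewrite Ey E => /(tw_ge Tw Lk lk).
Qed.

Lemma H_step j : (forall j', j < j' -> j' <= n -> Hst j') ->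
  (forall j', j < j' -> j' <= n -> Vst j') -> Hst j.
Proof.
move=> IHH IHV k g f Tw R Ra Rb; case: (R) => Fin Fm Ff.
have k0 : 0 < k := Tw.1.
have R0b : forall b, rk (g 0 b) = j by case.
have d0 : forall b, j <= rk (g 0 b) by move=> b; rewrite R0b.
have jn : j <= n by rewrite -Ra rk_le.
case: (eqVneq j n) => [ejn|njn].
  split; last by left.
  move=> x rx; have dx : j <= rk x by rewrite rx.
  have [l [t [lk E]]] := Fin x dx; exists t; rewrite E.
  case: l lk E => // l lk E.
  have := tw_rk Tw t t (ltn0Sn l) lk; rewrite R0b; have := rk_le (g l.+1 t); lia.
have {njn} jn1 : j < n by rewrite ltn_neqAle njn.
have Ld : forall b, lb (g 0 b) != lb (g 0 (~~ b)).
  by move=> b; apply: lab_neq; [rewrite !R0b|exact: (tw_neq Tw b k0)].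
have [z [za zb]] := lab_third (lb (g 0 false)) (lb (g 0 true)).
have Lz : forall b, lb (g 0 b) != z by case; rewrite eq_sym.
have rp : forall i c, j + i <= n -> rk (pt (j + i) c) = j + i by move=> i c H; rewrite rk_pt.
have dp : forall i c, j + i <= n -> j <= rk (pt (j + i) c) by move=> i c H; rewrite rp //; lia.
have e0 : rk (pt j z) = j by rewrite rk_pt.
have de : j <= rk (pt j z) by rewrite e0.
have jn1' : j + 1 <= n by lia.
have F1z : exists l t, [/\ 0 < l, l < k & f (pt (j + 1) z) = g l t].
  have [l [t [lk E]]] := Fin _ (dp 1 z jn1').
  have H : forall b, (g 0 b <= pt (j + 1) z)%O.
    by move=> b; apply: le1; rewrite ?rp ?R0b ?lb_pt ?addn1 //; lia.
  have := Fm _ _ (d0 false) (dp 1 z jn1') (H false).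
  have := Fm _ _ (d0 true) (dp 1 z jn1') (H true).
  rewrite !Ff // E => A B; exists l, t; split=> //; exact: (tw_above2 Tw lk k0 B A).
have k1 : 1 < k by case: F1z => l [t [? ? _]]; lia.
have [s /= Hs] := orient (fun b => rk (g 1 b)).
have ac : forall b b', (g 0 b < g 1 b')%O by move=> b b'; exact: (tw_lt Tw _ _ (ltn0Sn 0) k1).
have rc1 : j < rk (g 1 s) by have := lt_rk (ac true s); rewrite R0b.
have dc : j <= rk (g 1 s) by lia.
have dd : j <= rk (g 1 (~~ s)) by lia.
have dg : forall L b, L < k -> j <= rk (g L b).
  move=> [|L] b Lk; first by rewrite R0b.
  by have := tw_rk Tw b b (ltn0Sn L) Lk; rewrite R0b; lia.
have Bot : forall y l t L b, j <= rk y -> L <= l -> l < k -> L < k ->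
    f y = g l t -> (y <= g L b)%O -> (y <= g L (~~ b))%O -> False.
  move=> y l t L b dy Ll lk Lk E H1 H2.
  have := Fm _ _ dy (dg L b Lk) H1; have := Fm _ _ dy (dg L (~~ b) Lk) H2.
  rewrite E !Ff // => A B; have := tw_below2 Tw lk Lk B A; lia.
case: (ltngtP (rk (g 1 s)) j.+1) => [|Hc|Hc]; first lia.
-
  have [l [t [lk E]]] := Fin _ de.
  have ec : forall b, (pt j z <= g 1 b)%O.
    move=> b; apply: le2; rewrite e0; case: b; move: Hs Hc; case: (s) => /=; lia.
  have l0 : l = 0.
    have := Fm _ _ de dc (ec s); have := Fm _ _ de dd (ec (~~ s)).
    rewrite E !Ff // => A B; have := tw_below2 Tw lk k1 B A; lia.
  subst l.
  have Ldt := Ld (~~ t); rewrite negbK in Ldt.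
  have F1w : exists l t', [/\ 0 < l, l < k & f (pt (j + 1) (lb (g 0 t))) = g l t'].
    have [l [t' [lk' E']]] := Fin _ (dp 1 (lb (g 0 t)) jn1').
    have H1 : (g 0 (~~ t) <= pt (j + 1) (lb (g 0 t)))%O.
      by apply: le1; rewrite ?rp ?R0b ?lb_pt ?addn1 //; lia.
    have H2 : (pt j z <= pt (j + 1) (lb (g 0 t)))%O.
      by apply: le1; rewrite ?rp ?e0 ?lb_pt ?addn1 1?eq_sym //; lia.
    have := Fm _ _ (d0 _) (dp 1 _ jn1') H1; have := Fm _ _ de (dp 1 _ jn1') H2.
    rewrite E E' Ff // => A B; exists l, t'; split=> //.
    exact: (tw_above2 Tw lk' k0 A B).
  have [lz [tz [lzp lzk Ez]]] := F1z.
  have [lw [tw [lwp lwk Ew]]] := F1w.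
  case: (ltngtP (rk (g 1 s)) (j + 2)) => [|Hc2|Hc2]; first lia.
  + exfalso; apply: (Bot _ _ _ 1 s (dp 1 z jn1') lzp lzk k1 Ez); apply: le2; rewrite rp //; lia.
  case: (ltngtP (rk (g 1 (~~ s))) (j + 3)) => [Hd|Hd|Hd].
  + have Hd2 : rk (g 1 (~~ s)) = j + 2 by lia.
    exfalso.
    have rk1 : forall b, rk (g 1 b) = j + 2 by case; move: Hc2 Hd2; case: (s) => /=.
    have jn2 : j + 2 <= n by rewrite -Hc2 rk_le.
    have Fin' : forall x, j + 2 <= rk x -> exists l t, [/\ 1 <= l, l < k & f x = g l t].
      move=> x hx; have dx : j <= rk x by lia.
      have U : forall y l0 t0, j <= rk y -> 0 < l0 -> l0 < k -> f y = g l0 t0 ->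
          (y <= x)%O -> exists l t, [/\ 1 <= l, l < k & f x = g l t].
        move=> y l0 t0 dy l0p l0k E0 yx.
        have [l' [t' [A B C]]] := up_lvl Tw R dy dx yx E0 l0k.
        by exists l', t'; split=> //; lia.
      case: (ltngtP (rk x) (j + 2)) => [|Hx|Hx]; first lia.
      * apply: (U _ _ _ (dp 1 z jn1') lzp lzk Ez).
        by apply: le2; rewrite rp //; lia.
      * case: (eqVneq (lb x) (lb (g 0 t))) => Lx.
          apply: (U _ _ _ (dp 1 z jn1') lzp lzk Ez).
          by apply: le1; rewrite ?rp ?lb_pt ?Lx 1?eq_sym //; lia.
        apply: (U _ _ _ (dp 1 _ jn1') lwp lwk Ew).
        by apply: le1; rewrite ?rp ?lb_pt 1?eq_sym //; lia.
    have [C1 _] := IHH (j + 2) ltac:(lia) jn2 (k - 1) _ f (tw_shift Tw k1)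
       (ret_shift R (leq_addr 2 j) k1 Fin') (rk1 _) (rk1 _).
    have [t2 Et2] := C1 _ (rp 2 (lb (g 0 (~~ t))) jn2); rewrite /= add0n in Et2.
    have H1 : (pt (j + 1) (lb (g 0 t)) <= pt (j + 2) (lb (g 0 (~~ t))))%O.
      by apply: le1; rewrite ?rp ?lb_pt //; lia.
    have H2 : (pt (j + 1) z <= pt (j + 2) (lb (g 0 (~~ t))))%O.
      by apply: le1; rewrite ?rp ?lb_pt 1?eq_sym //; lia.
    have Ew2 : f (pt (j + 1) (lb (g 0 t))) = g 1 t2.
      have := Fm _ _ (dp 1 _ jn1') (dp 2 _ jn2) H1; rewrite Ew Et2 => A.
      by apply: (tw_eq Tw lwk k1 A).
    have Ez2 : f (pt (j + 1) z) = g 1 t2.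
      have := Fm _ _ (dp 1 _ jn1') (dp 2 _ jn2) H2; rewrite Ez Et2 => A.
      by apply: (tw_eq Tw lzk k1 A).
    have Eb : forall b, g 1 t2 = g 1 b.
      move=> b; have db : j <= rk (g 1 b) by rewrite rk1; lia.
      case: (eqVneq (lb (g 0 t)) (lb (g 1 b))) => wb.
        have H : (pt (j + 1) z <= g 1 b)%O.
          by apply: le1; rewrite ?rp ?lb_pt ?rk1 -?wb 1?eq_sym //; lia.
        have := Fm _ _ (dp 1 _ jn1') db H; rewrite Ez2 Ff // => A.
        exact: (tw_eq Tw k1 k1 A).
      have H : (pt (j + 1) (lb (g 0 t)) <= g 1 b)%O.
        by apply: le1; rewrite ?rp ?lb_pt ?rk1 //; lia.
      have := Fm _ _ (dp 1 _ jn1') db H; rewrite Ew2 Ff // => A.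
      exact: (tw_eq Tw k1 k1 A).
    by have := tw_neq Tw s k1; rewrite -Eb -(Eb (~~ s)) eqxx.
  + exfalso; have := tw_incomp Tw s k1; rewrite lt2 //; lia.
  + have Lcd : lb (g 1 s) = lb (g 1 (~~ s)).
      by apply: nlt_inv; [exact: (tw_incomp Tw s k1)|lia].
    case: (eqVneq (lb (g 0 t)) (lb (g 1 s))) => wc.
    * exfalso; apply: (Bot _ _ _ 1 s (dp 1 z jn1') lzp lzk k1 Ez).
        by apply: le1; rewrite ?rp ?lb_pt // -?wc 1?eq_sym //; lia.
      by apply: le2; rewrite rp //; lia.
    * exfalso; apply: (Bot _ _ _ 1 s (dp 1 _ jn1') lwp lwk k1 Ew).
        by apply: le1; rewrite ?rp ?lb_pt //; lia.
      by apply: le2; rewrite rp //; lia.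
-
  have labz : forall b, rk (g 1 b) = j.+1 -> lb (g 1 b) = z.
    move=> b rb.
    have H0 : lb (g 0 false) != lb (g 1 b) by apply: lt_lab; rewrite ?R0b.
    have H1 : lb (g 0 true) != lb (g 1 b) by apply: lt_lab; rewrite ?R0b.
    have Lft : lb (g 0 false) != lb (g 0 true) := Ld false.
    case: (lab_cover (lb (g 1 b)) Lft (Lz true) (Lz false)) => E.
    - by move: H0; rewrite E eqxx.
    - by move: H1; rewrite E eqxx.
    - by [].
  have lc := labz s Hc.
  case: (ltngtP (rk (g 1 (~~ s))) (j + 2)) => [Hd|Hd|Hd].
  + exfalso; have Hd1 : rk (g 1 (~~ s)) = j.+1 by lia.
    have := tw_neq Tw s k1; rewrite (@eq_rl (g 1 s) (g 1 (~~ s))) ?eqxx //.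
      by rewrite Hc Hd1.
    by rewrite lc labz.
  + exfalso; have := tw_incomp Tw s k1; rewrite lt2 //; lia.
  have ld : lb (g 1 (~~ s)) = z.
    rewrite -lc; apply/esym/nlt_inv; [exact: (tw_incomp Tw s k1)|lia].
  have jn2 : j + 2 <= n by rewrite -Hd rk_le.
  have ed : (pt j z <= g 1 (~~ s))%O by apply: le2; rewrite e0; lia.
  have [l [t [lk E]]] := Fin _ de.
  have := Fm _ _ de dd ed; rewrite E Ff // => /(tw_le Tw lk k1) [l0|[l1 t1]].
  *
    have {l0} l0 : l = 0 by lia.
    subst l.
    have Ldt := Ld (~~ t); rewrite negbK in Ldt.
    have Fw : f (pt (j + 1) (lb (g 0 t))) = g 1 (~~ s).
      have dpw := dp 1 (lb (g 0 t)) jn1'.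
      have H1 : (g 0 (~~ t) <= pt (j + 1) (lb (g 0 t)))%O.
        by apply: le1; rewrite ?rp ?R0b ?lb_pt ?addn1 //; lia.
      have H2 : (pt j z <= pt (j + 1) (lb (g 0 t)))%O.
        by apply: le1; rewrite ?rp ?e0 ?lb_pt ?addn1 1?eq_sym ?Lz //; lia.
      have H3 : (pt (j + 1) (lb (g 0 t)) <= g 1 (~~ s))%O.
        by apply: le1; rewrite ?rp ?lb_pt ?ld ?Lz //; lia.
      have [l' [t' [lk' E']]] := Fin _ dpw.
      have := Fm _ _ (d0 _) dpw H1; have := Fm _ _ de dpw H2; have := Fm _ _ dpw dd H3.
      rewrite E E' !Ff // => A B C.
      have := tw_above2 Tw lk' k0 B C => L1.
      exact: (tw_eq Tw lk' k1 A L1).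
    have F2 : exists l t', [/\ 1 < l, l < k &
        f (pt (j + 2) (lb (g 0 (~~ t)))) = g l t'].
      have dpb := dp 2 (lb (g 0 (~~ t))) jn2.
      have H1 : (pt (j + 1) (lb (g 0 t)) <= pt (j + 2) (lb (g 0 (~~ t))))%O.
        by apply: le1; rewrite ?rp ?lb_pt //; lia.
      have H2 : (g 1 s <= pt (j + 2) (lb (g 0 (~~ t))))%O.
        by apply: le1; rewrite ?rp ?Hc ?lb_pt ?lc 1?eq_sym ?Lz //; lia.
      have [l' [t' [lk' E']]] := Fin _ dpb.
      have := Fm _ _ (dp 1 _ jn1') dpb H1; have := Fm _ _ dc dpb H2.
      rewrite E' Fw Ff // => A B; exists l', t'; split=> //.
      exact: (tw_above2 Tw lk' k1 A B).
    have [l2 [t2 [l2p l2k E2]]] := F2.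
    have k2 : 2 < k by lia.
    have [s2 /= Hs2] := orient (fun b => rk (g 2 b)).
    have rq := tw_rk Tw (~~ s) s2 (ltnSn 1) k2; rewrite Hd in rq.
    have dq : j <= rk (g 2 s2) by lia.
    have dr : j <= rk (g 2 (~~ s2)) by lia.
    case: (ltngtP (rk (g 2 s2)) (j + 3)) => [|Hq|Hq]; first lia.
    + exfalso; apply: (Bot _ _ _ 2 s2 (dp 2 _ jn2) l2p l2k k2 E2).
        by apply: le2; rewrite rp //; lia.
      by apply: le2; rewrite rp //; lia.
    have jn3 : j + 3 <= n by rewrite -Hq rk_le.
    have lqz : lb (g 2 s2) != z.
      by rewrite -ld eq_sym; apply: lt_lab; [exact: (tw_lt Tw _ _ (ltnSn 1) k2)|lia].
    have U : forall x, j + 3 <= rk x -> (pt (j + 2) (lb (g 0 (~~ t))) <= x)%O ->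
        exists l t, [/\ 2 <= l, l < k & f x = g l t].
      move=> x hx yx; have dx : j <= rk x by lia.
      have [l' [t' [A B C]]] := up_lvl Tw R (dp 2 _ jn2) dx yx E2 l2k.
      by exists l', t'; split=> //; lia.
    case: (ltngtP (rk (g 2 (~~ s2))) (j + 4)) => [Hr|Hr|Hr].
    +
      have {Hr} Hr : rk (g 2 (~~ s2)) = j + 3 by lia.
      have lrz : lb (g 2 (~~ s2)) != z.
        by rewrite -ld eq_sym; apply: lt_lab; [exact: (tw_lt Tw _ _ (ltnSn 1) k2)|lia].
      have lqr : lb (g 2 s2) != lb (g 2 (~~ s2)).
        by apply: lab_neq; [lia|exact: (tw_neq Tw s2 k2)].
      split.
        move=> x rx.
        have Lft : lb (g 0 false) != lb (g 0 true) := Ld false.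
        case: (lab_cover (lb x) Lft (Lz true) (Lz false)) => Lx.
        - by exists false; rewrite (@eq_rl x (g 0 false)) ?Ff ?R0b.
        - by exists true; rewrite (@eq_rl x (g 0 true)) ?Ff ?R0b.
        - by exists t; rewrite (@eq_rl x (pt j z)) ?e0 ?lb_pt.
      right; split=> //; first by exists (~~ s).
      move=> x hx.
      case: (ltngtP (rk x) (j + 3)) => [|Hx|Hx]; first lia.
      * by apply: U => //; apply: le2; rewrite rp //; lia.
      case: (eqVneq (lb x) (lb (g 0 (~~ t)))) => Lx; last first.
        by apply: U => //; apply: le1; rewrite ?rp ?lb_pt 1?eq_sym //; lia.
      have zq : z != lb (g 2 s2) by rewrite eq_sym.
      have zr : z != lb (g 2 (~~ s2)) by rewrite eq_sym.
      case: (lab_cover (lb x) zq lqr zr) => Lx'.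
      - by move: (Lz (~~ t)); rewrite -Lx Lx' eqxx.
      - by exists 2, s2; rewrite (@eq_rl x (g 2 s2)) ?Ff ?Hq.
      - by exists 2, (~~ s2); rewrite (@eq_rl x (g 2 (~~ s2))) ?Ff ?Hr.
    + exfalso; have := tw_incomp Tw s2 k2; rewrite lt2 //; lia.
    + exfalso.
      have Lqr : lb (g 2 s2) = lb (g 2 (~~ s2)).
        by apply: nlt_inv; [exact: (tw_incomp Tw s2 k2)|lia].
      case: (eqVneq (lb (g 2 s2)) (lb (g 0 (~~ t)))) => qw.
      * have Fin'' : forall x, j + 3 <= rk x -> exists l t, [/\ 2 <= l, l < k & f x = g l t].
          move=> x hx.
          case: (ltngtP (rk x) (j + 3)) => [|Hx|Hx]; first lia.
          - by apply: U => //; apply: le2; rewrite rp //; lia.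
          case: (eqVneq (lb x) (lb (g 0 (~~ t)))) => Lx; last first.
            by apply: U => //; apply: le1; rewrite ?rp ?lb_pt 1?eq_sym //; lia.
          exists 2, s2; split=> //.
          by rewrite (@eq_rl x (g 2 s2)) ?Ff // ?Hq // Lx qw.
        have Hr' : rk (g 2 (~~ s2)) = (j + 3).+1 by lia.
        exact: (IHV (j + 3) ltac:(lia) jn3 (k - 2) _ f s2 (tw_shift Tw k2)
           (ret_shift R (leq_addr 3 j) k2 Fin'') Hq Hr' Lqr).
      * apply: (Bot _ _ _ 2 s2 (dp 2 _ jn2) l2p l2k k2 E2).
          by apply: le1; rewrite ?rp ?lb_pt 1?eq_sym //; lia.
        by apply: le2; rewrite rp //; lia.
  *
    exfalso; subst l t.
    have Fd2 : forall b, f (pt (j + 1) (lb (g 0 b))) = g 1 (~~ s).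
      move=> b; have dpb := dp 1 (lb (g 0 b)) jn1'.
      have H1 : (pt j z <= pt (j + 1) (lb (g 0 b)))%O.
        by apply: le1; rewrite ?rp ?e0 ?lb_pt ?addn1 1?eq_sym ?Lz //; lia.
      have H2 : (pt (j + 1) (lb (g 0 b)) <= g 1 (~~ s))%O.
        by apply: le1; rewrite ?rp ?lb_pt ?ld ?Lz //; lia.
      have [l' [t' [lk' E']]] := Fin _ dpb.
      have := Fm _ _ de dpb H1; have := Fm _ _ dpb dd H2; rewrite E E' Ff // => A B.
      have := tw_ge Tw k1 lk' B => L1.
      exact: (tw_eq Tw lk' k1 A L1).
    have F2b : forall b, exists l t, [/\ 1 < l, l < k & f (pt (j + 2) (lb (g 0 b))) = g l t].
      move=> b; have dpb := dp 2 (lb (g 0 b)) jn2.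
      have Ldb := Ld (~~ b); rewrite negbK in Ldb.
      have H1 : (pt (j + 1) (lb (g 0 (~~ b))) <= pt (j + 2) (lb (g 0 b)))%O.
        by apply: le1; rewrite ?rp ?lb_pt //; lia.
      have H2 : (g 1 s <= pt (j + 2) (lb (g 0 b)))%O.
        by apply: le1; rewrite ?rp ?Hc ?lb_pt ?lc 1?eq_sym ?Lz //; lia.
      have [l' [t' [lk' E']]] := Fin _ dpb.
      have := Fm _ _ (dp 1 _ jn1') dpb H1; have := Fm _ _ dc dpb H2.
      rewrite E' Fd2 Ff // => A B; exists l', t'; split=> //.
      exact: (tw_above2 Tw lk' k1 A B).
    have [l2 [t2' [l2p l2k _]]] := F2b false.
    have k2 : 2 < k by lia.
    have [s2 /= Hs2] := orient (fun b => rk (g 2 b)).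
    have rq := tw_rk Tw (~~ s) s2 (ltnSn 1) k2; rewrite Hd in rq.
    have dq : j <= rk (g 2 s2) by lia.
    have dr : j <= rk (g 2 (~~ s2)) by lia.
    have pick : forall (c : 'I_3), exists b, lb (g 0 b) != c.
      move=> c; case: (eqVneq (lb (g 0 false)) c) => H; last by exists false.
      by exists true; rewrite -H eq_sym (Ld false).
    case: (ltngtP (rk (g 2 s2)) (j + 3)) => [|Hq|Hq]; first lia.
    + have [l' [t' [lp lk' E']]] := F2b false.
      apply: (Bot _ _ _ 2 s2 (dp 2 _ jn2) lp lk' k2 E'); apply: le2; rewrite rp //; lia.
    case: (ltngtP (rk (g 2 (~~ s2))) (j + 4)) => [Hr|Hr|Hr].
    + have {Hr} Hr : rk (g 2 (~~ s2)) = j + 3 by lia.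
      have rk2 : forall b, rk (g 2 b) = j + 3 by case; move: Hq Hr; case: (s2) => /=.
      have jn3 : j + 3 <= n by rewrite -Hq rk_le.
      have Fin'' : forall x, j + 3 <= rk x -> exists l t, [/\ 2 <= l, l < k & f x = g l t].
        move=> x hx; have dx : j <= rk x by lia.
        have U : forall y l0 t0, j <= rk y -> 1 < l0 -> l0 < k -> f y = g l0 t0 ->
            (y <= x)%O -> exists l t, [/\ 2 <= l, l < k & f x = g l t].
          move=> y l0 t0 dy l0p l0k E0 yx.
          have [l' [t' [A B C]]] := up_lvl Tw R dy dx yx E0 l0k.
          by exists l', t'; split=> //; lia.
        have [b Lb] := pick (lb x).
        have [l' [t' [lp lk' E']]] := F2b b.
        apply: (U _ _ _ (dp 2 _ jn2) lp lk' E').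
        case: (ltngtP (rk x) (j + 3)) => [|Hx|Hx]; first lia.
        * by apply: le2; rewrite rp //; lia.
        * by apply: le1; rewrite ?rp ?lb_pt //; lia.
      have [C1 _] := IHH (j + 3) ltac:(lia) jn3 (k - 2) _ f (tw_shift Tw k2)
         (ret_shift R (leq_addr 3 j) k2 Fin'') (rk2 _) (rk2 _).
      have [t3 Et3] := C1 _ (rp 3 z jn3); rewrite /= add0n in Et3.
      have E2 : forall b, f (pt (j + 2) (lb (g 0 b))) = g 2 t3.
        move=> b; have [l' [t' [lp lk' E']]] := F2b b.
        have H : (pt (j + 2) (lb (g 0 b)) <= pt (j + 3) z)%O.
          by apply: le1; rewrite ?rp ?lb_pt ?Lz //; lia.
        have := Fm _ _ (dp 2 _ jn2) (dp 3 _ jn3) H; rewrite E' Et3 => A.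
        apply: (tw_eq Tw lk' k2 A); lia.
      have Eb : forall b', g 2 t3 = g 2 b'.
        move=> b'; have [b Lb] := pick (lb (g 2 b')).
        have db : j <= rk (g 2 b') by rewrite rk2; lia.
        have H : (pt (j + 2) (lb (g 0 b)) <= g 2 b')%O.
          by apply: le1; rewrite ?rp ?rk2 ?lb_pt //; lia.
        have := Fm _ _ (dp 2 _ jn2) db H; rewrite E2 Ff // => A.
        exact: (tw_eq Tw k2 k2 A).
      by have := tw_neq Tw s2 k2; rewrite -Eb -(Eb (~~ s2)) eqxx.
    + have := tw_incomp Tw s2 k2; rewrite lt2 //; lia.
    + have Lqr : lb (g 2 s2) = lb (g 2 (~~ s2)).
        by apply: nlt_inv; [exact: (tw_incomp Tw s2 k2)|lia].
      have [b Lb] := pick (lb (g 2 s2)).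
      have [l' [t' [lp lk' E']]] := F2b b.
      apply: (Bot _ _ _ 2 s2 (dp 2 _ jn2) lp lk' k2 E').
        by apply: le1; rewrite ?rp ?lb_pt //; lia.
      by apply: le2; rewrite rp //; lia.
Qed.

Lemma core_all m j : j + m = n -> Hst j /\ Vst j.
Proof.
elim/ltn_ind: m j => m IH j jm.
have IHB : forall j', j < j' -> j' <= n -> Hst j' /\ Vst j'.
  move=> j' h1 h2; have h3 : n - j' < m by lia.
  have h4 : j' + (n - j') = n by lia.
  exact: (IH (n - j') h3 j' h4).
have IHH : forall j', j < j' -> j' <= n -> Hst j' by move=> j' h1 h2; case: (IHB j' h1 h2).
have IHV : forall j', j < j' -> j' <= n -> Vst j' by move=> j' h1 h2; case: (IHB j' h1 h2).
by split; [exact: H_step|exact: V_step].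
Qed.

End Core.
Section Rank.
Context {disp : Order.disp_t} {T : finPOrderType disp}.

Lemma has_chainP (p : T) m : reflect
  (exists s : seq T, [/\ size s = m.+1, sorted <%O s & last p s = p])
  (has_chain_to p m).
Proof.
apply: (iffP existsP) => [[s /andP [H1 /eqP H2]] | [s [Hs H1 H2]]].
  by exists (val s); rewrite size_tuple.
by exists (@Tuple m.+1 T s (introT eqP Hs)); rewrite /= H1 H2 eqxx.
Qed.

Lemma chain_size (p : T) m : has_chain_to p m -> m < #|T|.
Proof.
move/has_chainP => [s [Hs H1 _]].
have U := lt_sorted_uniq H1.
by have := max_card (mem s); rewrite (card_uniqP U) Hs.
Qed.

Lemma rank_max (p : T) m : has_chain_to p m -> m <= rank p.
Proof.
move=> H; have Hm := chain_size H.
exact: (@leq_bigmax_cond _ (fun m : 'I_#|T| => has_chain_to p m) (fun m => val m) (Ordinal Hm) H).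
Qed.

Lemma chain0 (p : T) : has_chain_to p 0.
Proof. by apply/has_chainP; exists [:: p]. Qed.

Lemma rank_has (p : T) : has_chain_to p (rank p).
Proof.
have H0 : 0 < #|T| by apply/card_gt0P; exists p.
have H : 0 < #|[pred m : 'I_#|T| | has_chain_to p m]|.
  by apply/card_gt0P; exists (Ordinal H0); rewrite inE chain0.
have [i0 Hi0 E] := @eq_bigmax_cond _ [pred m : 'I_#|T| | has_chain_to p m] (fun m => val m) H.
rewrite /rank.
have -> : \max_(m < #|T| | has_chain_to p m) m = val i0 by rewrite -E.
by move: Hi0; rewrite inE.
Qed.

Lemma lt_rank (x y : T) : (x < y)%O -> rank x < rank y.
Proof.
move=> xy; have /has_chainP [s [Hs H1 H2]] := rank_has x.
have : has_chain_to y (rank x).+1.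
  apply/has_chainP; exists (rcons s y); rewrite size_rcons Hs last_rcons; split=> //.
  case: s Hs H1 H2 => // a s _ /= H1 H2.
  by rewrite rcons_path H1 H2.
by move/rank_max.
Qed.

Lemma rank_pred (y : T) : 0 < rank y -> exists x, (x < y)%O /\ rank x = (rank y).-1.
Proof.
move=> ry; have /has_chainP [s [Hs H1 H2]] := rank_has y.
case/lastP: s Hs H1 H2 => [|s a]; first by [].
rewrite size_rcons last_rcons => /eqP; rewrite eqSS => /eqP Hs H1 H2; subst a.
case: s Hs H1 => [|b s] Hs H1; first by move: Hs => /= E; lia.
move: H1; rewrite /= rcons_path => /andP [H1 H3].
exists (last b s); split=> //.
have : has_chain_to (last b s) (rank y).-1.
  apply/has_chainP; exists (b :: s); split=> //; rewrite Hs; lia.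
move/rank_max => H; have := lt_rank H3; lia.
Qed.

Lemma sorted_chain (s : seq T) : sorted <%O s -> is_chain [set x in s].
Proof.
rewrite lt_sorted_pairwise => H; apply/forallP => x; apply/implyP; rewrite inE => xs.
apply/forallP => y; apply/implyP; rewrite inE => ys.
elim: s H xs ys => // a s IH /= /andP [Ha Hs].
rewrite !inE => /orP [/eqP ->|xs] /orP [/eqP ->|ys].
- by rewrite lexx.
- by move/allP: Ha => /(_ y ys) /ltW ->.
- by move/allP: Ha => /(_ x xs) /ltW ->; rewrite orbT.
- exact: IH.
Qed.

Lemma rank_bound r : ranked (T := T) r -> forall p : T, rank p <= r.
Proof.
move=> Hr p; have /has_chainP [s [Hs H1 _]] := rank_has p.
set C := [set x in s].
have CC : is_chain C := sorted_chain H1.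
have cC : #|C| = (rank p).+1.
  by rewrite -Hs -(card_uniqP (lt_sorted_uniq H1)); apply: eq_card => x; rewrite inE.
case: (@arg_maxnP _ C (fun D => is_chain D && (C \subset D)) (fun D => #|D|)).
  by rewrite CC subxx.
move=> D /andP [cD sD] maxD.
have MD : maximal_chain D.
  rewrite /maximal_chain cD /=; apply/forallP => x; apply/implyP => cx.
  have sx : C \subset x |: D.
    by apply: (subset_trans sD); apply/subsetP => y yD; rewrite !inE yD orbT.
  have := maxD (x |: D); rewrite cx sx /= => /(_ isT) /=.
  rewrite cardsU1; case: (x \in D) => //= H; lia.
have := Hr _ MD; have := subset_leq_card sD; lia.
Qed.

End Rank.

Definition clt (a b : 'I_6) := (a != b) && crown_le a b.

Lemma idx_low (a b : 'I_6) : a < 3 -> clt b a = false.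
Proof. by case: a b => [[|[|[|[|[|[|a]]]]]] Ha] // [[|[|[|[|[|[|b]]]]]] Hb]. Qed.

Lemma idx_high (a : 'I_6) : 3 <= a -> exists b : 'I_6, (b < 3) && clt b a.
Proof.
case: a => [[|[|[|[|[|[|a]]]]]] Ha] // _.
- by exists (@Ordinal 6 0 isT).
- by exists (@Ordinal 6 1 isT).
- by exists (@Ordinal 6 2 isT).
Qed.

Lemma idx_miss (b : 'I_6) : 3 <= b -> exists a : 'I_6, (a < 3) && ~~ clt a b.
Proof.
case: b => [[|[|[|[|[|[|b]]]]]] Hb] // _.
- by exists (@Ordinal 6 2 isT).
- by exists (@Ordinal 6 0 isT).
- by exists (@Ordinal 6 1 isT).
Qed.

Lemma idx_uniq (a a' b : 'I_6) : a < 3 -> a' < 3 -> 3 <= b ->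
  ~~ clt a b -> ~~ clt a' b -> a = a'.
Proof.
case: a => [[|[|[|[|[|[|a]]]]]] Ha] //; case: a' => [[|[|[|[|[|[|a']]]]]] Ha'] //;
case: b => [[|[|[|[|[|[|b]]]]]] Hb] //= _ _ _; by move=> *; apply/val_inj.
Qed.

Lemma idx_inj (a b b' : 'I_6) : a < 3 -> 3 <= b -> 3 <= b' ->
  ~~ clt a b -> ~~ clt a b' -> b = b'.
Proof.
case: a => [[|[|[|[|[|[|a]]]]]] Ha] //; case: b' => [[|[|[|[|[|[|b']]]]]] Hb'] //;
case: b => [[|[|[|[|[|[|b]]]]]] Hb] //= _ _ _; by move=> *; apply/val_inj.
Qed.

Section Stack.
Context {disp : Order.disp_t} {T : finPOrderType disp}.
Variable n : nat.
Hypothesis Hs : six_stack (T := T) n.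

Lemma crown i : i < n -> exists phi : 'I_6 -> T,
  [/\ injective phi, forall a, rank (phi a) = (if a < 3 then i else i.+1),
      forall x, i <= rank x <= i.+1 -> exists a, x = phi a &
      forall a b, (phi a < phi b)%O = clt a b].
Proof.
move=> iin; case: Hs => _ _ Hiso; have [phi [inj E ord]] := Hiso i iin.
have lt : forall a b, (phi a < phi b)%O = clt a b.
  by move=> a b; rewrite lt_def ord (inj_eq inj) /clt eq_sym.
have mem : forall x, i <= rank x <= i.+1 -> exists a, x = phi a.
  move=> x hx; have : x \in Prange i i.+1 by rewrite inE.
  by rewrite E => /imsetP [a _ ->]; exists a.
have rg : forall a, i <= rank (phi a) <= i.+1.
  move=> a; have : phi a \in Prange i i.+1 by rewrite E; apply: imset_f.
  by rewrite inE.
exists phi; split=> // a.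
have := rg a; case: ifP => a3 ra.
- case: (eqVneq (rank (phi a)) i) => // Hr.
  have [x [xa rx]] := rank_pred (ltac:(lia) : 0 < rank (phi a)).
  have [b Eb] := mem x ltac:(lia); subst x.
  by move: xa; rewrite lt idx_low // a3.
- have [b /andP [b3 bl]] := idx_high (ltac:(lia) : 3 <= a).
  have ba : (phi b < phi a)%O by rewrite lt.
  have := lt_rank ba; have := rg b; lia.
Qed.

Lemma rk_bd (x : T) : rank x <= n.
Proof. by case: Hs => _ Hr _; exact: rank_bound Hr x. Qed.

Lemma lvl_gen i : i <= n -> exists psi : 'I_3 -> T,
  [/\ injective psi, forall c, rank (psi c) = i &
      forall x, rank x = i -> exists c, x = psi c].
Proof.
move=> iin; have [ilt|ein] : i < n \/ i = n by lia.
- have [phi [inj Er mem lt]] := crown ilt.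
  exists (fun c => phi (widen_ord (isT : 3 <= 6) c)); split.
  + by move=> c c' /inj /(congr1 val) /= E; apply/val_inj.
  + by move=> c; rewrite Er /= ltn_ord.
  + move=> x rx; have [a Ea] := mem x ltac:(lia); subst x.
    move: rx; rewrite Er; case: ifP => a3 ra; last lia.
    exists (Ordinal a3); by congr phi; apply/val_inj.
- have n1 : 0 < n by case: Hs.
  have [phi [inj Er mem lt]] := crown (ltac:(lia) : n.-1 < n).
  exists (fun c => phi (rshift 3 c)); split.
  + move=> c c' /inj /(congr1 val) E; have E' : 3 + c = 3 + c' := E; apply: ord_inj; lia.
  + move=> c; have h : (rshift 3 c < 3) = false.
      by apply/negbTE; rewrite -leqNgt; exact: leq_addr.
    by rewrite Er h; lia.
  + move=> x rx; have [a Ea] := mem x ltac:(lia); subst x.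
    move: rx; rewrite Er; case: ifP => a3 ra; first lia.
    have a3' : 3 <= a by rewrite leqNgt a3.
    exists (@Ordinal 3 (a - 3) ltac:(have := ltn_ord a; lia)).
    by congr phi; apply/val_inj => /=; lia.
Qed.

Lemma F2e i (u : T) : i < n -> rank u = i.+1 -> exists v, rank v = i /\ ~~ (v < u)%O.
Proof.
move=> iin ru; have [phi [inj Er mem lt]] := crown iin.
have [b Eb] := mem u ltac:(lia); subst u.
move: ru; rewrite Er; case: ifP => b3 rb; first lia.
have b3' : 3 <= b by rewrite leqNgt b3.
have [a /andP [a3 na]] := idx_miss b3'.
by exists (phi a); rewrite Er a3 lt.
Qed.

Lemma F2u i (u v v' : T) : i < n -> rank u = i.+1 -> rank v = i -> rank v' = i ->
  ~~ (v < u)%O -> ~~ (v' < u)%O -> v = v'.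
Proof.
move=> iin ru rv rv'; have [phi [inj Er mem lt]] := crown iin.
have [b Eb] := mem u ltac:(lia); subst u.
have [a Ea] := mem v ltac:(lia); subst v.
have [a' Ea'] := mem v' ltac:(lia); subst v'.
move: ru rv rv'; rewrite !Er; case: ifP => b3 rb; first lia.
case: ifP => a3 ra; last lia; case: ifP => a3' ra'; last lia.
have b3'' : 3 <= b by rewrite leqNgt b3.
rewrite !lt => H1 H2; congr phi; exact: (idx_uniq a3 a3' b3'' H1 H2).
Qed.

Lemma F3 i (u u' v : T) : i < n -> rank u = i.+1 -> rank u' = i.+1 -> rank v = i ->
  ~~ (v < u)%O -> ~~ (v < u')%O -> u = u'.
Proof.
move=> iin ru ru' rv; have [phi [inj Er mem lt]] := crown iin.
have [b Eb] := mem u ltac:(lia); subst u.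
have [b' Eb'] := mem u' ltac:(lia); subst u'.
have [a Ea] := mem v ltac:(lia); subst v.
move: ru ru' rv; rewrite !Er; case: ifP => b3 rb; first lia.
case: ifP => b3' rb'; first lia; case: ifP => a3 ra; last lia.
have b3'' : 3 <= b by rewrite leqNgt b3.
have b3''' : 3 <= b' by rewrite leqNgt b3'.
rewrite !lt => H1 H2; congr phi; exact: (idx_inj a3 b3'' b3''' H1 H2).
Qed.

Definition mdown (u : T) : T := odflt u [pick v | (rank v == (rank u).-1) && ~~ (v < u)%O].
Definition lvl0 : {set T} := [set x | rank x == 0].
Definition lab0 (x : T) : 'I_3 := inord (index x (enum lvl0)).
Definition lab (x : T) : 'I_3 := lab0 (iter (rank x) mdown x).
Definition ptd (d : T) i c := odflt d [pick x | (rank x == i) && (lab x == c)].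

Lemma mdown_spec u : 0 < rank u -> rank (mdown u) = (rank u).-1 /\ ~~ (mdown u < u)%O.
Proof.
move=> ru; have iin : (rank u).-1 < n by have := rk_bd u; lia.
have ru' : rank u = ((rank u).-1).+1 by lia.
have [v [rv nv]] := F2e iin ru'.
rewrite /mdown; case: pickP => [w /andP [/eqP H1 H2] | H] //=.
by move: (H v); rewrite rv eqxx nv.
Qed.

Lemma lab_down u : 0 < rank u -> lab u = lab (mdown u).
Proof.
move=> ru; rewrite /lab (mdown_spec ru).1.
by case: (rank u) ru => [//|m] _; rewrite iterSr.
Qed.

Lemma lvl0_card : #|lvl0| <= 3.
Proof.
have [psi [inj rp mem]] := lvl_gen (leq0n n).
have : lvl0 \subset psi @: setT.
  by apply/subsetP => x; rewrite inE => /eqP /mem [c ->]; apply: imset_f.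
move/subset_leq_card => H; apply: (leq_trans H); apply: (leq_trans (leq_imset_card _ _)).
by rewrite cardsT card_ord.
Qed.

Lemma lab_inj i : i <= n -> forall x y, rank x = i -> rank y = i -> lab x = lab y -> x = y.
Proof.
elim: i => [|i IH] iin x y rx ry.
- rewrite /lab rx ry /= /lab0 => E.
  have xm : x \in enum lvl0 by rewrite mem_enum inE rx.
  have ym : y \in enum lvl0 by rewrite mem_enum inE ry.
  have sz : size (enum lvl0) <= 3 by rewrite -cardE lvl0_card.
  have ix : index x (enum lvl0) < 3 by apply: leq_trans sz; rewrite index_mem.
  have iy : index y (enum lvl0) < 3 by apply: leq_trans sz; rewrite index_mem.
  have := congr1 (@nat_of_ord 3) E; rewrite !inordK //.
  by move=> E'; rewrite -(nth_index x xm) -(nth_index x ym) E'.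
- have px : 0 < rank x by rewrite rx.
  have py : 0 < rank y by rewrite ry.
  rewrite (lab_down px) (lab_down py) => E.
  have [rx' nx] := mdown_spec px.
  have [ry' ny] := mdown_spec py.
  rewrite rx /= in rx'; rewrite ry /= in ry'.
  have iin' : i <= n by lia.
  have Em := IH iin' (mdown x) (mdown y) rx' ry' E.
  have iin'' : i < n by lia.
  rewrite Em in nx.
  exact: (F3 iin'' rx ry ry' nx ny).
Qed.

Lemma lab_surj i : i <= n -> forall c, exists x, rank x = i /\ lab x = c.
Proof.
move=> iin c; have [psi [inj rp mem]] := lvl_gen iin.
have D : forall c1 c2, c1 != c2 -> lab (psi c1) != lab (psi c2).
  move=> c1 c2; apply: contra => /eqP E; apply/eqP/inj.
  exact: (lab_inj iin (rp _) (rp _) E).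
have d01 := D (@Ordinal 3 0 isT) (@Ordinal 3 1 isT) isT.
have d12 := D (@Ordinal 3 1 isT) (@Ordinal 3 2 isT) isT.
have d02 := D (@Ordinal 3 0 isT) (@Ordinal 3 2 isT) isT.
case: (lab_cover c d01 d12 d02) => ->.
- by exists (psi (@Ordinal 3 0 isT)).
- by exists (psi (@Ordinal 3 1 isT)).
- by exists (psi (@Ordinal 3 2 isT)).
Qed.

Lemma ptd_spec d i c : i <= n -> rank (ptd d i c) = i /\ lab (ptd d i c) = c.
Proof.
move=> iin; have [x [rx lx]] := lab_surj iin c.
rewrite /ptd; case: pickP => [w /andP [/eqP H1 /eqP H2] | H] //=.
by move: (H x); rewrite rx lx !eqxx.
Qed.

Lemma ptd_eta d x : ptd d (rank x) (lab x) = x.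
Proof.
have [H1 H2] := ptd_spec d (lab x) (rk_bd x).
exact: (lab_inj (rk_bd x) H1 erefl H2).
Qed.

Lemma adj x u : rank u = (rank x).+1 -> (x < u)%O = (lab x != lab u).
Proof.
move=> ru; have [rm nm] := mdown_spec (ltac:(lia) : 0 < rank u).
have iin : rank x < n by have := rk_bd u; lia.
rewrite (lab_down (ltac:(lia) : 0 < rank u)).
case: (eqVneq (lab x) (lab (mdown u))) => E.
  rewrite (lab_inj (rk_bd x) erefl _ E) ?(negbTE nm) //; lia.
case: (boolP (x < u)%O) => // H.
have rm' : rank (mdown u) = rank x by rewrite rm ru.
by move: E; rewrite (F2u iin ru erefl rm' H nm) eqxx.
Qed.

Lemma two (x y : T) : rank x + 2 <= rank y -> (x < y)%O.
Proof.
move=> H; have [d Ed] : exists d, rank y = rank x + 2 + d by exists (rank y - (rank x + 2)); lia.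
elim: d y Ed {H} => [|d IH] y Ed.
- have [c [c1 c2]] := lab_third (lab x) (lab y).
  have i1 : (rank x).+1 <= n by have := rk_bd y; lia.
  have [r1 l1] := ptd_spec x c i1.
  apply: (@lt_trans _ _ (ptd x (rank x).+1 c)).
    by rewrite adj // l1 eq_sym.
  by rewrite adj ?l1 //; lia.
- have [v [vy rv]] := rank_pred (ltac:(lia) : 0 < rank y).
  apply: (lt_trans (IH v ltac:(lia)) vy).
Qed.

Lemma ltE_stack x y : (x < y)%O =
  (rank x + 2 <= rank y) || ((rank y == (rank x).+1) && (lab x != lab y)).
Proof.
case: (ltngtP (rank y) (rank x).+1) => H.
- have -> : (rank x + 2 <= rank y) = false by apply/negbTE; lia.
  rewrite /=; apply/negbTE/negP => /lt_rank; lia.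
- by rewrite two //; lia.
- rewrite adj //; have -> : (rank x + 2 <= rank y) = false by apply/negbTE; lia.
  by [].
Qed.

End Stack.

Unset Implicit Arguments. Set Strict Implicit.

Theorem lemma5p8 (disp : Order.disp_t) (T : finPOrderType disp) (n : nat)
  (Q : {set T}) :
  six_stack (T := T) n -> retract setT Q -> four_tower Q ->
  #|Prange 0 0 :&: minimals Q| = 2 ->
  (3 <= n)%N /\
  exists Q' : {set T}, retract (Prange 3 n) Q' /\ four_tower Q'.
Proof.
move=> Hs [_ [f [fQ fmono ffix]]] [k [k1 [G [Ginj EQ Gle]]]] Hmin.
case: k k1 G Ginj EQ Gle => // k' _ G Ginj EQ Gle.
pose g (l : nat) (b : bool) : T := G (inord l, b).
have Tw : tower k'.+1 g.
  split=> // l l' b b' lk l'k; rewrite /g Gle /tower_le /= !inordK //.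
  by rewrite xpair_eqE -[inord l == inord l'](inj_eq val_inj) /= !inordK.
have Fin : forall x, 0 <= rank x -> exists l t, l < k'.+1 /\ f x = g l t.
  move=> x _; have := fQ x (in_setT x); rewrite EQ => /imsetP [[o b] _ ->].
  by exists o, b; split=> //; rewrite /g inord_val.
have gQ : forall l t, g l t \in Q by move=> l t; rewrite EQ; apply: imset_f.
have R : ret rank 0 k'.+1 g f.
  split=> //; first by move=> x y _ _; apply: fmono; rewrite in_setT.
  by move=> l t _; rewrite ffix.
have Rb : forall b, rank (g 0 b) = 0.
  move=> b; apply/eqP; apply/negP => Hb.
  have : Prange 0 0 :&: minimals Q \subset [set g 0 (~~ b)].
    apply/subsetP => x; rewrite !inE => /andP [rx /andP [xQ /forallP mx]].
    have rx0 : rank x <= 0 := (andP rx).2.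
    move: (xQ); rewrite EQ => /imsetP [[o b'] _ Ex].
    have Exg : x = g (val o) b' by rewrite Ex /g inord_val.
    have o0 : val o = 0.
      case E: (val o) => [//|o']; have := mx (g 0 b'); rewrite gQ /=.
      rewrite Exg E (tw_lt Tw) //; rewrite -E; exact: ltn_ord.
    rewrite o0 in Exg; rewrite Exg in rx0 *.
    apply/eqP; clear -Hb rx0; move: Hb rx0; case: b; case: b' => //= H1 H2; exfalso; lia.
  by move/subset_leq_card; rewrite Hmin cards1.
have n1 : 0 < n by case: Hs.
pose d := g 0 false.
have rk_pt : forall i c, i <= n -> rank (ptd d i c) = i.
  by move=> i c iin; case: (ptd_spec Hs d c iin).
have lb_pt : forall i c, i <= n -> lab (ptd d i c) = c.
  by move=> i c iin; case: (ptd_spec Hs d c iin).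
have [H _] := core_all rk_pt lb_pt (ptd_eta Hs d) (rk_bd Hs) (ltE_stack Hs) (add0n n).
case: (H _ _ _ Tw R (Rb false) (Rb true)) => _ [n0|[n3 k2 [b1 Rb1] Fin2]]; first lia.
split; first by rewrite add0n in n3.
pose G' (p : 'I_(k'.+1 - 2) * bool) : T := g (p.1 + 2) p.2.
have G'le : forall x y, (G' x <= G' y)%O = tower_le x y.
  case=> [o b] [o' b']; have ho := ltn_ord o; have ho' := ltn_ord o'.
  rewrite /G' /tower_le /= Tw.2; try lia.
  by rewrite ltn_add2r eqn_add2r xpair_eqE.
exists (G' @: [set: 'I_(k'.+1 - 2) * bool]); split.
- split.
    apply/subsetP => x /imsetP [[o b] _ ->]; rewrite inE /G' /=.
    have ho := ltn_ord o.
    have := tw_rk (ltE_stack Hs) Tw b1 b (ltac:(lia) : 1 < o + 2) (ltac:(lia) : o + 2 < k'.+1).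
    rewrite Rb1 => H1; have A : 3 <= rank (g (o + 2) b) by lia.
    by apply/andP; split; [exact: A|exact: rk_bd Hs _].
  exists f; split.
  + move=> x; rewrite inE => /andP [rx _].
    have [l [t [l2 lk ->]]] := Fin2 x rx.
    have lk' : l - 2 < k'.+1 - 2 by lia.
    apply/imsetP; exists (Ordinal lk', t) => //; rewrite /G' /= subnK //.
  + by move=> x y _ _; apply: fmono; rewrite in_setT.
  + by move=> q /imsetP [[o b] _ ->]; apply: ffix; exact: gQ.
- exists (k'.+1 - 2); split; first lia.
  exists G'; split=> //.
  move=> [o b] [o' b'] E.
  have := G'le (o, b) (o', b'); rewrite E lexx /tower_le /=.
  have := G'le (o', b') (o, b); rewrite E lexx /tower_le /=.
  move=> /esym /orP [H1|/eqP //] /esym /orP [H2|/eqP //]; lia.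
Qed.
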